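(* Let $G=(V,E)$ be a connected, locally finite, undirected graph, let $s:V\to\mathbb{R}$, and let $\ell$ be a legal toppling procedure for $s$. Then: (i) for every $f\in\mathcal{F}_s$ we have $\ell_\infty\le f$ pointwise; (ii) if $u$ is any stabilizing toppling procedure for $s$, then $\ell_\infty\le u_\infty$; (iii) if $u$ is any legal stabilizing toppling procedure for $s$, then for all $x\in V$, $u_\infty(x)=\inf\{f(x): f\in\mathcal{F}_s\}$. In particular $u_\infty$ and the final configuration $s+\Delta u_\infty$ do not depend on the choice of legal stabilizing toppling procedure $u$.
   Context: $\Delta u(x)=\sum_{y\sim x}(u(y)-u(x))$ and $\mathcal{F}_s=\{f:V\to\mathbb{R}: f\ge 0,\ s+\Delta f\le 1\}$. A toppling procedure is given by a well-ordered closed set $T\subset[0,\infty)$ with $0\in T$ and a function $(t,x)\mapsto u_t(x)\in[0,\infty)$ on $T\times V$ such that for all $x$: $u_0(x)=0$; $u_{t_1}(x)\le u_{t_2}(x)$ for $t_1\le t_2$; and $t_n\uparrow t$ implies $u_{t_n}(x)\uparrow u_t(x)$. Set $s_t=s+\Delta u_t$ and $t^-=\sup\{r\in T: r<t\}$. The procedure is legal for $s$ if $u_t(x)-u_{t^-}(x)\le (s_{t^-}(x)-1)^+/\deg(x)$ for all $x\in V$ and $t\in T\setminus\{0\}$. It is finite if $u_\infty(x):=\lim_{t\to\sup T}u_t(x)<\infty$ for all $x$, and stabilizing for $s$ if it is finite and $s+\Delta u_\infty\le 1$. *)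

(* Defs.v *)
From Stdlib Require Import Reals List Relations.
Open Scope R_scope.

(* A locally finite graph on vertex type V is given by its neighbour lists:
   nbr x is the (finite) list of neighbours of x. *)
Definition simple_undirected_graph {V : Type} (nbr : V -> list V) : Prop :=
  (forall x, NoDup (nbr x)) /\
  (forall x y, In y (nbr x) -> In x (nbr y)) /\
  (forall x, ~ In x (nbr x)).

Definition connected {V : Type} (nbr : V -> list V) : Prop :=
  forall x y, clos_refl_trans V (fun a b => In b (nbr a)) x y.

Definition deg {V : Type} (nbr : V -> list V) (x : V) : R := INR (length (nbr x)).

Definition Lap {V : Type} (nbr : V -> list V) (u : V -> R) (x : V) : R :=
  fold_right (fun y acc => (u y - u x) + acc) 0 (nbr x).

Definition in_Fs {V : Type} (nbr : V -> list V) (s f : V -> R) : Prop :=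
  forall x, 0 <= f x /\ s x + Lap nbr f x <= 1.

Definition time_set (T : R -> Prop) : Prop :=
  T 0 /\
  (forall t, T t -> 0 <= t) /\
  (forall t, (forall e, 0 < e -> exists r, T r /\ Rabs (r - t) < e) -> T t) /\
  (forall A : R -> Prop, (forall t, A t -> T t) -> (exists t, A t) ->
     exists m, A m /\ forall t, A t -> m <= t).

Definition toppling_procedure {V : Type} (T : R -> Prop) (u : R -> V -> R) : Prop :=
  time_set T /\
  (forall t x, T t -> 0 <= u t x) /\
  (forall x, u 0 x = 0) /\
  (forall t1 t2 x, T t1 -> T t2 -> t1 <= t2 -> u t1 x <= u t2 x) /\
  (forall (tn : nat -> R) t x, (forall n, T (tn n)) -> T t ->
     (forall n, tn n <= tn (S n)) -> Un_cv tn t ->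
     Un_cv (fun n => u (tn n) x) (u t x)).

Definition is_tminus (T : R -> Prop) (t tm : R) : Prop :=
  is_lub (fun r => T r /\ r < t) tm.

Definition legal {V : Type} (nbr : V -> list V) (s : V -> R)
    (T : R -> Prop) (u : R -> V -> R) : Prop :=
  forall t tm x, T t -> t <> 0 -> is_tminus T t tm ->
    u t x - u tm x <= Rmax 0 (s x + Lap nbr (u tm) x - 1) / deg nbr x.

Definition lim_along (T : R -> Prop) (g : R -> R) (l : R) : Prop :=
  forall e, 0 < e -> exists r, T r /\
    forall t, T t -> r <= t -> Rabs (g t - l) < e.

Definition final_odometer {V : Type} (T : R -> Prop) (u : R -> V -> R)
    (uinf : V -> R) : Prop :=
  forall x, lim_along T (fun t => u t x) (uinf x).

Definition finite_procedure {V : Type} (T : R -> Prop) (u : R -> V -> R) : Prop :=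
  forall x, exists l, lim_along T (fun t => u t x) l.

Definition stabilizing {V : Type} (nbr : V -> list V) (s : V -> R)
    (T : R -> Prop) (u : R -> V -> R) : Prop :=
  finite_procedure T u /\
  forall uinf, final_odometer T u uinf -> forall x, s x + Lap nbr uinf x <= 1.

Definition is_inf (A : R -> Prop) (m : R) : Prop :=
  (forall a, A a -> m <= a) /\ (forall b, (forall a, A a -> b <= a) -> b <= m).

(* Main.v *)
Require Import Defs.
From Stdlib Require Import Reals List Relations.
From Stdlib Require Import Lra Classical ClassicalEpsilon FunctionalExtensionality.
Open Scope R_scope.

Section Aux.
Context {V : Type} (nbr : V -> list V).

Lemma Lap_bound (g f : V -> R) x :
  (forall y, g y <= f y) -> Lap nbr g x <= Lap nbr f x + deg nbr x * (f x - g x).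
Proof.
  intros H. unfold Lap, deg. induction (nbr x) as [|a ys IH].
  - simpl. lra.
  - cbn [fold_right length]. rewrite S_INR. specialize (H a).
    rewrite Rmult_plus_distr_r, Rmult_1_l. lra.
Qed.

Fixpoint runmax (g : nat -> R) (n : nat) : R :=
  match n with O => g O | S k => Rmax (runmax g k) (g (S k)) end.

Lemma runmax_P (P : R -> Prop) g : (forall n, P (g n)) -> forall n, P (runmax g n).
Proof. intros H n; induction n; simpl; auto. apply Rmax_case; auto. Qed.

Lemma runmax_ge g n : g n <= runmax g n.
Proof. destruct n; simpl. lra. apply Rmax_r. Qed.

Lemma runmax_mono g n : runmax g n <= runmax g (S n).
Proof. simpl. apply Rmax_l. Qed.

Lemma lim_le (T : R -> Prop) g L B :
  lim_along T g L -> (forall t, T t -> g t <= B) -> L <= B.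
Proof.
  intros HL HB. destruct (Rle_dec L B); auto.
  destruct (HL (L - B)) as [r [Tr Hr]]; [lra|].
  specialize (Hr r Tr (Rle_refl _)). specialize (HB r Tr). split_Rabs; lra.
Qed.

Lemma lim_ge (T : R -> Prop) g L B :
  lim_along T g L -> (forall t, T t -> B <= g t) -> B <= L.
Proof.
  intros HL HB. destruct (Rle_dec B L); auto.
  destruct (HL (B - L)) as [r [Tr Hr]]; [lra|].
  specialize (Hr r Tr (Rle_refl _)). specialize (HB r Tr). split_Rabs; lra.
Qed.

Lemma lim_unique (T : R -> Prop) g a b :
  lim_along T g a -> lim_along T g b -> a = b.
Proof.
  intros Ha Hb. destruct (Req_dec a b) as [|Hne]; auto.
  assert (He : 0 < Rabs (a - b) / 2).
  { assert (0 < Rabs (a - b)) by (apply Rabs_pos_lt; lra). lra. }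
  destruct (Ha _ He) as [r1 [T1 H1]]. destruct (Hb _ He) as [r2 [T2 H2]].
  set (t := Rmax r1 r2).
  assert (Tt : T t) by (apply Rmax_case; auto).
  specialize (H1 t Tt (Rmax_l _ _)). specialize (H2 t Tt (Rmax_r _ _)).
  exfalso. revert H1 H2. generalize (g t). intros v. split_Rabs; lra.
Qed.

Lemma lim_exists (T : R -> Prop) (l : R -> V -> R) x B :
  T 0 ->
  (forall t1 t2, T t1 -> T t2 -> t1 <= t2 -> l t1 x <= l t2 x) ->
  (forall t, T t -> l t x <= B) ->
  exists L, lim_along T (fun t => l t x) L /\ L <= B.
Proof.
  intros T0 Hm HB.
  set (E := fun v => exists t, T t /\ v = l t x).
  destruct (completeness E) as [L [HL1 HL2]].
  - exists B. intros v [t [Tt ->]]. auto.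
  - exists (l 0 x). exists 0. auto.
  - exists L. split.
    + intros e He.
      destruct (classic (exists r, T r /\ L - e < l r x)) as [[r [Tr Hr]]|Hn].
      * exists r. split; auto. intros t Tt Hrt.
        assert (l r x <= l t x) by auto.
        assert (l t x <= L) by (apply HL1; exists t; auto).
        split_Rabs; lra.
      * exfalso. assert (L <= L - e); [|lra].
        apply HL2. intros v [t [Tt ->]].
        destruct (Rle_dec (l t x) (L - e)); auto.
        exfalso; apply Hn; exists t; split; auto; lra.
    + apply HL2. intros v [t [Tt ->]]. auto.
Qed.

Lemma legal_below (s : V -> R) (T : R -> Prop) (l : R -> V -> R) :
  toppling_procedure T l -> legal nbr s T l ->
  forall f, in_Fs nbr s f -> forall t x, T t -> l t x <= f x.
Proof.
  intros [[T0 [Tpos [Tcl Two]]] [Hnn [H0 [Hmono Hcont]]]] Hleg f Hf.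
  apply NNPP. intro Hneg.
  assert (Hex : exists t, T t /\ exists x, f x < l t x).
  { apply NNPP; intro Hn; apply Hneg. intros t x Tt.
    destruct (Rle_dec (l t x) (f x)); auto.
    exfalso; apply Hn; exists t; split; auto; exists x; lra. }
  destruct (Two (fun t => T t /\ exists x, f x < l t x)) as [m [[Tm [x0 Hx0]] Hmin]];
    [tauto|exact Hex|].
  assert (Hbelow : forall r, T r -> r < m -> forall x, l r x <= f x).
  { intros r Tr Hr x. destruct (Rle_dec (l r x) (f x)); auto.
    assert (m <= r) by (apply Hmin; split; auto; exists x; lra). lra. }
  assert (Hm0 : m <> 0).
  { intro; subst. rewrite H0 in Hx0. destruct (Hf x0). lra. }
  assert (Hmpos : 0 < m) by (specialize (Tpos m Tm); lra).
  assert (Hall : forall x, l m x <= f x); [|specialize (Hall x0); lra].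
  set (E := fun r => T r /\ r < m).
  destruct (completeness E) as [tm [Htm1 Htm2]].
  { exists m. intros r [_ Hr]; lra. }
  { exists 0. split; auto. }
  assert (Happ : forall e, 0 < e -> exists r, E r /\ tm - e < r).
  { intros e He. apply NNPP; intro Hn.
    assert (tm <= tm - e); [|lra]. apply Htm2. intros r Er.
    destruct (Rle_dec r (tm - e)); auto. exfalso; apply Hn; exists r; split; auto; lra. }
  assert (Htm_le : tm <= m) by (apply Htm2; intros r [_ Hr]; lra).
  assert (Ttm : T tm).
  { apply Tcl. intros e He. destruct (Happ e He) as [r [Er Hr]]. exists r.
    split; [apply Er|]. assert (r <= tm) by (apply Htm1; auto). split_Rabs; lra. }
  destruct (Req_dec tm m) as [Heq|Hneq].
  -
    assert (Hg : forall n : nat, { r | E r /\ m - / (INR n + 1) < r }).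
    { intro n. apply constructive_indefinite_description.
      rewrite <- Heq. apply Happ. apply Rinv_0_lt_compat.
      generalize (pos_INR n); lra. }
    set (g := fun n => proj1_sig (Hg n)).
    assert (HgE : forall n, E (g n)) by (intro n; exact (proj1 (proj2_sig (Hg n)))).
    assert (Hgl : forall n, m - / (INR n + 1) < g n)
      by (intro n; exact (proj2 (proj2_sig (Hg n)))).
    set (h := runmax g).
    assert (HhE : forall n, E (h n)) by (apply runmax_P; auto).
    assert (Hcv : Un_cv h m).
    { intros eps Heps. destruct (archimed_cor1 eps Heps) as [N [HN HN0]].
      exists N. intros n Hn. unfold Rdist.
      specialize (HhE n) as [_ Hhn].
      specialize (Hgl n). generalize (runmax_ge g n); intro Hge. fold h in Hge.
      assert (/ (INR n + 1) <= / INR N).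
      { apply Rinv_le_contravar. apply lt_0_INR; auto.
        apply le_INR in Hn. lra. }
      split_Rabs; lra. }
    intro x.
    assert (Hc := Hcont h m x (fun n => proj1 (HhE n)) Tm (runmax_mono g) Hcv).
    destruct (Rle_dec (l m x) (f x)) as [|Hgt]; auto. exfalso.
    destruct (Hc (l m x - f x)) as [N HN]; [lra|].
    specialize (HN N (le_n N)). unfold Rdist in HN.
    assert (l (h N) x <= f x) by (apply Hbelow; apply HhE).
    split_Rabs; lra.
  - assert (Hlt : tm < m) by lra.
    assert (Hg : forall y, l tm y <= f y) by (apply Hbelow; auto).
    intro x.
    specialize (Hleg m tm x Tm Hm0 (conj Htm1 Htm2)).
    assert (Hb := Lap_bound (l tm) f x Hg).
    destruct (Hf x) as [_ Hfx].
    assert (Hd : 0 <= deg nbr x) by apply pos_INR.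
    assert (Hgx := Hg x).
    assert (Hmx : Rmax 0 (s x + Lap nbr (l tm) x - 1) <= deg nbr x * (f x - l tm x)).
    { apply Rmax_lub; [apply Rmult_le_pos; lra|lra]. }
    destruct (Req_dec (deg nbr x) 0) as [Hd0|Hd0].
    + rewrite Hd0, Rmult_0_l in Hmx.
      assert (Rmax 0 (s x + Lap nbr (l tm) x - 1) = 0)
        by (apply Rle_antisym; [lra|apply Rmax_l]).
      rewrite H, Hd0 in Hleg. unfold Rdiv in Hleg. rewrite Rmult_0_l in Hleg. lra.
    + assert (Hdp : 0 < deg nbr x) by lra.
      assert (Rmax 0 (s x + Lap nbr (l tm) x - 1) / deg nbr x <= f x - l tm x).
      { unfold Rdiv. apply (Rmult_le_reg_l (deg nbr x)); auto.
        rewrite <- Rmult_assoc, (Rmult_comm _ (Rmax _ _)), Rmult_assoc,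
          Rinv_r, Rmult_1_r; lra. }
      lra.
Qed.

End Aux.

Theorem proposition2p5 (V : Type) (nbr : V -> list V)
  (Hg : simple_undirected_graph nbr) (Hc : connected nbr)
  (s : V -> R) (T : R -> Prop) (l : R -> V -> R)
  (Hl : toppling_procedure T l) (Hlegal : legal nbr s T l) :
  (* (i) *)
  (forall f, in_Fs nbr s f ->
     forall x, exists L, lim_along T (fun t => l t x) L /\ L <= f x) /\
  (* (ii) *)
  (forall (T' : R -> Prop) (u : R -> V -> R),
     toppling_procedure T' u -> stabilizing nbr s T' u ->
     forall x, exists L, lim_along T (fun t => l t x) L /\
       forall U, lim_along T' (fun t => u t x) U -> L <= U) /\
  (* (iii) *)
  (forall (T' : R -> Prop) (u : R -> V -> R),
     toppling_procedure T' u -> legal nbr s T' u -> stabilizing nbr s T' u ->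
     forall x U, lim_along T' (fun t => u t x) U ->
       is_inf (fun a => exists f, in_Fs nbr s f /\ a = f x) U) /\
  (* in particular: independence of the legal stabilizing procedure *)
  (forall (T1 : R -> Prop) (u1 : R -> V -> R) (T2 : R -> Prop) (u2 : R -> V -> R)
          (u1inf u2inf : V -> R),
     toppling_procedure T1 u1 -> legal nbr s T1 u1 -> stabilizing nbr s T1 u1 ->
     toppling_procedure T2 u2 -> legal nbr s T2 u2 -> stabilizing nbr s T2 u2 ->
     final_odometer T1 u1 u1inf -> final_odometer T2 u2 u2inf ->
     (forall x, u1inf x = u2inf x) /\
     (forall x, s x + Lap nbr u1inf x = s x + Lap nbr u2inf x)).
Proof.
  assert (Hi : forall T l, toppling_procedure T l -> legal nbr s T l ->
     forall f, in_Fs nbr s f ->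
     forall x, exists L, lim_along T (fun t => l t x) L /\ L <= f x).
  { intros T0 l0 Hp Hle f Hf x.
    pose proof Hp as [[T00 _] [_ [_ [Hm _]]]].
    apply lim_exists; auto.
    intros t Tt. eapply legal_below; eauto. }
  assert (Hfin : forall T' u, toppling_procedure T' u -> stabilizing nbr s T' u ->
     exists uinf, in_Fs nbr s uinf /\ final_odometer T' u uinf).
  { intros T' u Hp [Hf Hst].
    set (uinf := fun x => proj1_sig (constructive_indefinite_description _ (Hf x))).
    assert (Hfo : final_odometer T' u uinf)
      by (intro x; exact (proj2_sig (constructive_indefinite_description _ (Hf x)))).
    exists uinf. split; auto. intro x. split; [|apply Hst; auto].
    destruct Hp as [_ [Hnn _]].
    eapply lim_ge; [apply Hfo|]. intros t Tt. simpl. apply Hnn; exact Tt. }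
  assert (Hiii : forall T' u, toppling_procedure T' u -> legal nbr s T' u ->
     stabilizing nbr s T' u ->
     forall x U, lim_along T' (fun t => u t x) U ->
       is_inf (fun a => exists f, in_Fs nbr s f /\ a = f x) U).
  { intros T' u Hp Hle Hst x U HU. split.
    - intros a [f [Hf ->]]. eapply lim_le; [exact HU|].
      intros t Tt. eapply legal_below; eauto.
    - intros b Hb. destruct (Hfin T' u Hp Hst) as [uinf [Hu Hfo]].
      rewrite (lim_unique _ _ _ _ HU (Hfo x)). apply Hb. exists uinf; auto. }
  split; [apply Hi; auto|]. split; [|split; [exact Hiii|]].
  - intros T' u Hp Hst x.
    destruct (Hfin T' u Hp Hst) as [uinf [Hu Hfo]].
    destruct (Hi T l Hl Hlegal uinf Hu x) as [L [HL HLe]].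
    exists L. split; auto. intros U HU.
    rewrite (lim_unique _ _ _ _ HU (Hfo x)); auto.
  - intros T1 u1 T2 u2 u1inf u2inf Hp1 Hl1 Hs1 Hp2 Hl2 Hs2 Hf1 Hf2.
    assert (Heq : forall x, u1inf x = u2inf x).
    { intro x. destruct (Hiii T1 u1 Hp1 Hl1 Hs1 x _ (Hf1 x)) as [A1 B1].
      destruct (Hiii T2 u2 Hp2 Hl2 Hs2 x _ (Hf2 x)) as [A2 B2].
      apply Rle_antisym; [apply B2|apply B1]; auto. }
    split; auto. intro x.
    rewrite (functional_extensionality _ _ Heq). reflexivity.
Qed.
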